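(* Let $\mathfrak{S}=(\mathcal{X},\mathsf{S},\gamma,(\Lambda_{a})_{a\in\mathcal{A}})$ be a spectral decomposition system for the Euclidean space $\mathfrak{H}$ with spectral-induced ordering mapping $\tau$, and let $\varphi\colon\mathcal{X}\to[-\infty,+\infty]$. Then: (i) $\varphi$ is $\mathsf{S}$-invariant $\Leftrightarrow$ $\varphi\circ\tau=\varphi$ $\Leftrightarrow$ $\varphi\circ\gamma\circ\Lambda_a=\varphi$ for every $a\in\mathcal{A}$; (ii) if $\varphi$ is $\mathsf{S}$-invariant, then $\operatorname{int}\operatorname{dom}(\varphi\circ\gamma)=\gamma^{-1}(\operatorname{int}\operatorname{dom}\varphi)$.
   Context: A Euclidean space is a finite-dimensional real inner product space; inner products are written $\langle\cdot,\cdot\rangle$ and norms $\|\cdot\|$. Let $\mathfrak{H}$ and $\mathcal{X}$ be Euclidean spaces, let $\mathsf{S}$ be a group acting on $\mathcal{X}$ by linear isometries, let $\gamma\colon\mathfrak{H}\to\mathcal{X}$, and let $(\Lambda_a)_{a\in\mathcal{A}}$ be a family of linear operators from $\mathcal{X}$ to $\mathfrak{H}$. The orbit of $x$ is $\mathsf{S}\cdot x=\{s\cdot x: s\in\mathsf{S}\}$; a map $f$ on $\mathcal{X}$ is $\mathsf{S}$-invariant if $f(s\cdot x)=f(x)$ for all $s,x$. The tuple is a spectral decomposition system for $\mathfrak{H}$ if: [A] every $\Lambda_a$ is an isometry; [B] there exists an $\mathsf{S}$-invariant $\tau\colon\mathcal{X}\to\mathcal{X}$ with $\tau(x)\in\mathsf{S}\cdot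 x$ for all $x$ and $\gamma\circ\Lambda_a=\tau$ for all $a$; [C] for every $X\in\mathfrak{H}$ there is $a$ with $X=\Lambda_a\gamma(X)$; [D] $\langle X,Y\rangle\leq\langle\gamma(X),\gamma(Y)\rangle$ for all $X,Y\in\mathfrak{H}$. The map $\tau$ in [B] is the spectral-induced ordering mapping. $\operatorname{dom}f=\{x: f(x)<+\infty\}$ and $\operatorname{int}$ denotes interior. *)

(* Defs.v *)
From HB Require Import structures.
From mathcomp Require Import all_boot all_order all_algebra.
From mathcomp Require Import all_classical all_reals all_analysis.
Set Implicit Arguments. Unset Strict Implicit. Unset Printing Implicit Defensive.
Import Order.TTheory GRing.Theory Num.Theory.
Import numFieldNormedType.Exports.
Local Open Scope classical_set_scope.
Local Open Scope ring_scope.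

(* Euclidean space of dimension n: row vectors 'rV[R]_n with the standard
   inner product (every finite-dimensional real inner product space is
   isometrically isomorphic to one of these). The topology is the library's
   (product/max-norm) topology on matrices, which coincides with the one
   induced by the Euclidean norm. *)
Definition dotv (R : realType) (n : nat) (u v : 'rV[R]_n) : R :=
  \sum_(i < n) u 0 i * v 0 i.

Definition is_linear (R : realType) (m n : nat) (f : 'rV[R]_m -> 'rV[R]_n) :=
  forall (c : R) (x y : 'rV[R]_m), f (c *: x + y) = c *: f x + f y.

Definition is_lin_isometry (R : realType) (m n : nat)
  (f : 'rV[R]_m -> 'rV[R]_n) :=
  is_linear f /\ forall x, dotv (f x) (f x) = dotv x x.

Definition group_action_by_lin_isometries (R : realType) (m : nat)
  (G : Type) (mul : G -> G -> G) (one : G) (inv : G -> G)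
  (act : G -> 'rV[R]_m -> 'rV[R]_m) :=
  [/\ (forall a b c, mul a (mul b c) = mul (mul a b) c),
      (forall a, mul one a = a /\ mul a one = a),
      (forall a, mul (inv a) a = one /\ mul a (inv a) = one),
      (forall x, act one x = x) &
      (forall a b x, act (mul a b) x = act a (act b x))] /\
  (forall a, is_lin_isometry (act a)).

Definition orbit (R : realType) (m : nat) (G : Type)
  (act : G -> 'rV[R]_m -> 'rV[R]_m) (x : 'rV[R]_m) : set 'rV[R]_m :=
  [set act s x | s in [set: G]].

Definition S_invariant (R : realType) (m : nat) (G : Type) (T : Type)
  (act : G -> 'rV[R]_m -> 'rV[R]_m) (f : 'rV[R]_m -> T) :=
  forall s x, f (act s x) = f x.

(* (X = 'rV_m, S = (G, act), gamma, (Lam a)_{a in A}) is a spectral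
   decomposition system for H = 'rV_n, with spectral-induced ordering
   mapping tau. *)
Definition spectral_decomposition_system_with (R : realType) (n m : nat)
  (G : Type) (mul : G -> G -> G) (one : G) (inv : G -> G)
  (act : G -> 'rV[R]_m -> 'rV[R]_m)
  (gamma : 'rV[R]_n -> 'rV[R]_m) (A : Type) (Lam : A -> 'rV[R]_m -> 'rV[R]_n)
  (tau : 'rV[R]_m -> 'rV[R]_m) :=
  [/\ group_action_by_lin_isometries mul one inv act,
      (forall a, is_linear (Lam a) /\
                           forall x, dotv (Lam a x) (Lam a x) = dotv x x),
      [/\ S_invariant act tau,
                    (forall x, orbit act x (tau x)) &
                    (forall a, gamma \o Lam a = tau)],
      (forall X : 'rV[R]_n, exists a, X = Lam a (gamma X)) &
      (forall X Y : 'rV[R]_n, dotv X Y <= dotv (gamma X) (gamma Y))].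

Definition edom (T : Type) (R : realType) (f : T -> \bar R) : set T :=
  [set x | (f x < +oo)%E].

(* Main.v *)
Require Import Defs.
From HB Require Import structures.
From mathcomp Require Import all_boot all_order all_algebra.
From mathcomp Require Import all_classical all_reals all_analysis.
From mathcomp Require Import ring lra.
Set Implicit Arguments.
Import Order.TTheory GRing.Theory Num.Theory.
Import numFieldNormedType.Exports.
Local Open Scope classical_set_scope.
Local Open Scope ring_scope.

Lemma entry_le (R : realType) p (u : 'rV[R]_p) j : `|u 0 j| <= `|u|.
Proof.
rewrite [leRHS]/Num.Def.normr /= mx_normrE; apply/bigmax_geP; right => /=; by exists (0, j).
Qed.

Lemma dotv_ge_entry (R : realType) p (u : 'rV[R]_p) j : u 0 j ^+ 2 <= dotv u u.
Proof.
rewrite /dotv (bigD1 j) //= -expr2 lerDl sumr_ge0 // => i _.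
by rewrite -expr2 sqr_ge0.
Qed.

Lemma dotv_le_norm (R : realType) p (u : 'rV[R]_p) : dotv u u <= p%:R * `|u| ^+ 2.
Proof.
rewrite /dotv.
apply: le_trans (_ : \sum_(i < p) `|u| ^+ 2 <= _).
  apply: ler_sum => i _; rewrite -expr2 -real_normK ?num_real //.
  by rewrite lerXn2r ?nnegrE // (@entry_le _ _ u).
by rewrite sumr_const card_ord mulr_natl.
Qed.

Lemma pre_nbhs (R : realType) p q (f : 'rV[R]_p -> 'rV[R]_q)
  (Hf : forall x y, dotv (f x - f y) (f x - f y) <= dotv (x - y) (x - y))
  x (P : set 'rV[R]_q) : nbhs (f x) P -> nbhs x (f @^-1` P).
Proof.
move=> /nbhs_ballP [e e0 HP]; apply/nbhs_ballP.
have p0 : 0 < p%:R + 1 :> R by rewrite ltr_wpDl.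
move: e0 => /= e0; exists (e / (p%:R + 1)); first by rewrite /= divr_gt0.
move=> y; rewrite mx_norm_ball /ball_ /= => Hy; apply: HP.
rewrite mx_norm_ball /ball_ /=.
have Hd : dotv (x - y) (x - y) < e ^+ 2.
  apply: (le_lt_trans (@dotv_le_norm _ _ (x - y))).
  have h1 : `|x - y| ^+ 2 <= (e / (p%:R + 1)) ^+ 2.
    by rewrite lerXn2r ?nnegrE ?(ltW Hy) ?divr_ge0 ?(ltW e0) ?(ltW p0).
  apply: le_lt_trans (_ : p%:R * (e / (p%:R + 1)) ^+ 2 < _).
    by rewrite ler_wpM2l.
  have hd : e / (p%:R + 1) * (p%:R + 1) = e by rewrite divfK // gt_eqF.
  have d0 : 0 < e / (p%:R + 1) by rewrite divr_gt0.
  move: hd d0; set d := e / (p%:R + 1) => hd d0.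
  have pp : 0 <= p%:R :> R by [].
  rewrite -hd; nra.
rewrite [X in X < _]/Num.Def.normr /= mx_normrE.
apply/bigmax_ltP => /=; split => // -[i j] _ /=.
rewrite ord1.
have := @dotv_ge_entry _ _ (f x - f y) j.
have := Hf x y.
have ha := normr_ge0 ((f x - f y) 0 j).
rewrite -[(f x - f y) 0 j ^+ 2]real_normK ?num_real //.
move=> h1 h2; nra.
Qed.

Lemma dotv_sub (R : realType) p (u v : 'rV[R]_p) :
  dotv (u - v) (u - v) = dotv u u + dotv v v - 2 * dotv u v.
Proof.
rewrite /dotv (eq_bigr (fun i => (u 0 i * u 0 i + v 0 i * v 0 i)
   - 2 * (u 0 i * v 0 i))); last by move=> i _; rewrite !mxE; ring.
by rewrite sumrB big_split mulr_sumr.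
Qed.

Theorem proposition4p4 (R : realType) (n m : nat)
  (G : Type) (mul : G -> G -> G) (one : G) (inv : G -> G)
  (act : G -> 'rV[R]_m -> 'rV[R]_m)
  (gamma : 'rV[R]_n -> 'rV[R]_m) (A : Type) (Lam : A -> 'rV[R]_m -> 'rV[R]_n)
  (tau : 'rV[R]_m -> 'rV[R]_m)
  (Hsds : spectral_decomposition_system_with mul one inv act gamma Lam tau)
  (phi : 'rV[R]_m -> \bar R) :
  ((S_invariant act phi <-> phi \o tau = phi) /\
   (phi \o tau = phi <-> forall a, phi \o gamma \o Lam a = phi)) /\
  (S_invariant act phi ->
     interior (edom (phi \o gamma)) = gamma @^-1` interior (edom phi)).
Proof.
case: Hsds => _ HLin [Htinv Htorb Hgl] HC HD.
have P1 : S_invariant act phi <-> phi \o tau = phi.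
  split=> [Hinv|H].
    apply/funext => x /=; case: (Htorb x) => s _ <-; exact: Hinv.
  move=> s x.
  have h1 := congr1 (fun f => f (act s x)) H.
  have h2 := congr1 (fun f => f x) H.
  move: h1 h2 => /=; rewrite Htinv => <- <-; by [].
split; first split => //.
  split=> [H a|H].
    by rewrite -compA Hgl.
  case: (HC 0) => a _; rewrite -(Hgl a); exact: H a.
move=> /P1 Ht.
have Hgam : forall x y, dotv (gamma x - gamma y) (gamma x - gamma y)
                         <= dotv (x - y) (x - y).
  move=> x y; rewrite !dotv_sub.
  have nx : dotv x x = dotv (gamma x) (gamma x).
    by case: (HC x) => a {1 2}->; case: (HLin a).
  have ny : dotv y y = dotv (gamma y) (gamma y).
    by case: (HC y) => a {1 2}->; case: (HLin a).
  have := HD x y; rewrite nx ny; lra.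
have HL : forall a x y, dotv (Lam a x - Lam a y) (Lam a x - Lam a y)
                         <= dotv (x - y) (x - y).
  move=> a x y; case: (HLin a) => Hl Hi.
  have -> : Lam a x - Lam a y = Lam a (x - y).
    have e : x - y = (-1) *: y + x by rewrite scaleN1r addrC.
    by rewrite e Hl scaleN1r addrC.
  by rewrite Hi.
apply/seteqP; split => X /= HX.
  case: (HC X) => a Ha.
  have := @pre_nbhs _ _ _ (Lam a) (HL a) (gamma X) (edom (phi \o gamma)).
  rewrite -Ha => /(_ HX).
  apply: filterS => y; rewrite /edom /=.
  have := congr1 (fun f => f y) (Hgl a) => /= ->.
  by have := congr1 (fun f => f y) Ht => /= ->.
exact: (@pre_nbhs _ _ _ gamma Hgam X (edom phi) HX).
Qed.
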